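(* Let $K$ be a field, $\mathcal P=(P,\preceq)$ a finite or countable locally finite poset and $\sim$ a bialgebra compatible equivalence relation on its nonempty intervals such that $\nabla([[a,x]]\otimes[[x,b]])=[[a,b]]$ for all $a\preceq x\preceq b$. Then the m-weak interval bialgebra $(L,\nabla,\eta;\Delta,\epsilon)$ is an m-weak Hopf algebra, and its antipode is $S=\widehat{\mu}$, where $\mu=\zeta^{\star-1}$ is the Möbius function, $\zeta$ is the constant function $1$ in the incidence algebra, and $\widehat\mu(I)=\mu(I)\,I$ for every class $I$.
   Context: Locally finite: all intervals $[a,b]$ are finite. $[[a,b]]$ is the $\sim$-class of $[a,b]$ and $L$ is the $K$-space with basis the classes. Bialgebra compatible: $[a,b]\sim[a',b']$, $[b,c]\sim[b',c']$ imply $[a,c]\sim[a',c']$; for $[a,b]\sim[a',b']$ there is a bijection $f:[a,b]\to[a',b']$ with $[a,x]\sim[a',f(x)]$, $[x,b]\sim[f(x),b']$; and $[a,a]\sim[b,b]$ for all $a,b$. On $L$: $\eta(r)=r[[a,a]]$; $\nabla(I\otimes J)=n_{I,J}[[a,b]]$ if there are $a\preceq x\preceq b$ with $I=[[a,x]]$, $J=[[x,b]]$ ($n_{I,J}$ the number of such $x$), else $0$; $\Delta([[a,b]])=\sum_{x\in[a,b]}[[a,x]]\otimes[[x,b]]$; $\epsilon([[a,b]])=\delta_{a,b}$. The incidence algebra consists of functions $\Phi$ from classes to $K$ with $(\Phi\star\Psi)([[a,b]])=\sum_{a\preceq x\preceq b}\Phi([[a,x]])\Psi([[x,b]])$ and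 unit $U([[a,b]])=\delta_{a,b}$. An m-weak bialgebra is an algebra $(L,\nabla,\eta)$ and coalgebra $(L,\Delta,\epsilon)$ with $\Delta\circ\eta=\eta\otimes\eta$, $\epsilon\circ\nabla=\epsilon\otimes\epsilon$, $\epsilon\circ\eta=\mathrm{id}_K$; it is an m-weak Hopf algebra if $\mathrm{id}_L$ has an inverse $S$ (the antipode) in the convolution algebra $(\mathrm{Hom}_K(L,L),\star,\eta\circ\epsilon)$, $f\star g=\nabla\circ(f\otimes g)\circ\Delta$. *)

(* Defs.v *)
From HB Require Import structures.
From mathcomp Require Import all_boot all_order all_algebra.
From mathcomp Require Import finmap.
From mathcomp.multinomials Require Import monalg.
From Stdlib Require Import ClassicalEpsilon.

Set Implicit Arguments.
Unset Strict Implicit.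
Unset Printing Implicit Defensive.

Import Order.TTheory GRing.Theory.
Local Open Scope ring_scope.

Section IntervalBialgebra.
Variables (F : fieldType) (d : Order.disp_t) (P : porderType d).

Definition locally_finite : Prop :=
  forall a b : P, exists s : seq P, forall x, (x \in s) = (a <= x <= b)%O.

Definition countable_poset : Prop := exists f : P -> nat, injective f.

(** Nonempty intervals [a,b] are represented by pairs (a,b) with a <= b. *)
Definition is_itv (p : P * P) : bool := (p.1 <= p.2)%O.

Variable sim : rel (P * P).

Definition sim_equiv : Prop :=
  [/\ (forall p, is_itv p -> sim p p),
      (forall p q, is_itv p -> is_itv q -> sim p q -> sim q p) &
      (forall p q r, is_itv p -> is_itv q -> is_itv r ->
          sim p q -> sim q r -> sim p r)].

Definition bialg_compatible : Prop :=
  [/\ sim_equiv,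
      (forall a b c a' b' c' : P, (a <= b)%O -> (b <= c)%O ->
          (a' <= b')%O -> (b' <= c')%O ->
          sim (a, b) (a', b') -> sim (b, c) (b', c') -> sim (a, c) (a', c')),
      (forall a b a' b' : P, (a <= b)%O -> (a' <= b')%O -> sim (a, b) (a', b') ->
          exists f : P -> P,
            [/\ (forall x, (a <= x <= b)%O -> (a' <= f x <= b')%O),
                {in [pred x | (a <= x <= b)%O] &, injective f},
                (forall y, (a' <= y <= b')%O -> exists2 x, (a <= x <= b)%O & f x = y) &
                (forall x, (a <= x <= b)%O -> sim (a, x) (a', f x) /\ sim (x, b) (f x, b'))]) &
      (forall a b : P, sim (a, a) (b, b))].

(** The classes [[a,b]]: each class is represented by a canonical
    representative interval chosen with [choose]. *)
Definition crep (p : P * P) : P * P := choose [pred q | is_itv q && sim p q] p.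

Definition cls := {p : P * P | is_itv p && (crep p == p)}.

(** [[a,b]] as an element of [cls] (None if not a <= b). *)
Definition clo (a b : P) : option cls := insub (crep (a, b)).

(** L = K-space with basis the classes; L (x) L and L (x) L (x) L. *)
Local Notation L := {malg F[cls]}.
Local Notation LL := {malg F[(cls * cls)%type]}.
Local Notation LLL := {malg F[(cls * cls * cls)%type]}.

Definition bas (a b : P) : L := if clo a b is Some c then << c >> else 0.

Definition itv_enum (a b : P) : seq P :=
  epsilon (inhabits [::])
    (fun s => uniq s /\ forall x, (x \in s) = (a <= x <= b)%O).

Definition tens (u v : L) : LL :=
  \sum_(i <- msupp u) \sum_(j <- msupp v) << (u@_i * v@_j) *g (i, j) >>.

Definition tens3l (w : LL) (v : L) : LLL :=
  \sum_(k <- msupp w) \sum_(j <- msupp v) << (w@_k * v@_j) *g (k.1, k.2, j) >>.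

Definition tens3r (u : L) (w : LL) : LLL :=
  \sum_(i <- msupp u) \sum_(k <- msupp w) << (u@_i * w@_k) *g (i, k.1, k.2) >>.

Definition decomp (I J : cls) (t : P * P * P) : Prop :=
  let: (a, x, b) := t in
  [/\ (a <= x)%O, (x <= b)%O, clo a x = Some I & clo x b = Some J].

Definition nablaB (I J : cls) : L :=
  match excluded_middle_informative (exists t, decomp I J t) with
  | left H =>
      let: (a, _, b) := proj1_sig (constructive_indefinite_description _ H) in
      (count (fun y => (clo a y == Some I) && (clo y b == Some J))
             (itv_enum a b))%:R *: bas a b
  | right _ => 0
  end.

Definition nabla (w : LL) : L := \sum_(k <- msupp w) w@_k *: nablaB k.1 k.2.

Definition lmul (u v : L) : L := nabla (tens u v).

Definition unitL : L := epsilon (inhabits 0) (fun u => exists a : P, u = bas a a).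

Definition eta (r : F) : L := r *: unitL.

Definition DeltaB (c : cls) : LL :=
  let: (a, b) := val c in \sum_(x <- itv_enum a b) tens (bas a x) (bas x b).

Definition Delta (u : L) : LL := \sum_(c <- msupp u) u@_c *: DeltaB c.

Definition epsB (c : cls) : F := if (val c).1 == (val c).2 then 1 else 0.

Definition eps (u : L) : F := \sum_(c <- msupp u) u@_c * epsB c.

Definition tmap (f g : L -> L) (w : LL) : LL :=
  \sum_(k <- msupp w) w@_k *: tens (f << k.1 >>) (g << k.2 >>).

Definition Delta_id (w : LL) : LLL :=
  \sum_(k <- msupp w) w@_k *: tens3l (Delta << k.1 >>) << k.2 >>.

Definition id_Delta (w : LL) : LLL :=
  \sum_(k <- msupp w) w@_k *: tens3r << k.1 >> (Delta << k.2 >>).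

(** (eps (x) id) and (id (x) eps), using K (x) L = L = L (x) K *)
Definition eps_id (w : LL) : L := \sum_(k <- msupp w) (w@_k * eps << k.1 >>) *: << k.2 >>.
Definition id_eps (w : LL) : L := \sum_(k <- msupp w) (w@_k * eps << k.2 >>) *: << k.1 >>.

Definition conv (f g : L -> L) : L -> L := fun u => nabla (tmap f g (Delta u)).

Definition mweak_bialgebra : Prop :=
  [/\
      (forall u v w : L, lmul (lmul u v) w = lmul u (lmul v w)),
      (forall (r : F) (u : L), lmul (eta r) u = r *: u /\ lmul u (eta r) = r *: u),
      (forall u : L, Delta_id (Delta u) = id_Delta (Delta u)),
      (forall u : L, eps_id (Delta u) = u /\ id_eps (Delta u) = u) &
      [/\ (forall r : F, Delta (eta r) = r *: tens (eta 1) (eta 1)),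
          (forall u v : L, eps (lmul u v) = eps u * eps v) &
          (forall r : F, eps (eta r) = r)]].

Definition is_antipode (S : L -> L) : Prop :=
  [/\ linear S,
      conv S idfun =1 (fun u => eta (eps u)) &
      conv idfun S =1 (fun u => eta (eps u))].

Definition mweak_hopf : Prop := mweak_bialgebra /\ exists S, is_antipode S.

Definition incev (Phi : cls -> F) (a b : P) : F :=
  if clo a b is Some c then Phi c else 0.

Definition inc_conv (Phi Psi : cls -> F) (c : cls) : F :=
  let: (a, b) := val c in
  \sum_(x <- itv_enum a b) incev Phi a x * incev Psi x b.

Definition zeta : cls -> F := fun _ => 1.

Definition incU : cls -> F := epsB.

Definition mobius : cls -> F :=
  epsilon (inhabits zeta)
    (fun m => inc_conv m zeta =1 incU /\ inc_conv zeta m =1 incU).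

Definition muhat (u : L) : L := \sum_(c <- msupp u) (u@_c * mobius c) *: << c >>.

End IntervalBialgebra.

Arguments locally_finite {d} P.
Arguments countable_poset {d} P.
Arguments bialg_compatible {d P} sim.
Arguments bas F {d P} sim a b.
Arguments lmul F {d P} sim u v.
Arguments mweak_hopf F {d P} sim.
Arguments is_antipode F {d P} sim S.
Arguments muhat F {d P} sim u.

(* Main.v *)
Require Import Defs.
From HB Require Import structures.
From mathcomp Require Import all_boot all_order all_algebra.
From mathcomp Require Import finmap.
From mathcomp.multinomials Require Import monalg.
From Stdlib Require Import ClassicalEpsilon Classical.

Set Implicit Arguments.
Unset Strict Implicit.
Unset Printing Implicit Defensive.
Import Order.TTheory GRing.Theory.
Local Open Scope fset_scope.
Local Open Scope ring_scope.

Section Ext.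
Variables (F : fieldType) (K : choiceType) (V : lmodType F).

Definition ext (T : K -> V) (w : {malg F[K]}) : V := \sum_(k <- msupp w) w@_k *: T k.

Lemma ext_sub T w (D : {fset K}) : msupp w `<=` D -> ext T w = \sum_(k <- D) w@_k *: T k.
Proof.
move=> le; rewrite /ext (big_fset_incl _ le) // => x _ /mcoeff_outdom ->.
by rewrite scale0r.
Qed.

Lemma ext_lin T c u v : ext T (c *: u + v) = c *: ext T u + ext T v.
Proof.
pose D := msupp u `|` msupp v `|` msupp (c *: u + v).
rewrite (@ext_sub T (c *: u + v) D) ?fsubsetUr //.
rewrite (@ext_sub T u D); last by apply: (fsubset_trans _ (fsubsetUl _ _)); exact: fsubsetUl.
rewrite (@ext_sub T v D); last by apply: (fsubset_trans _ (fsubsetUl _ _)); exact: fsubsetUr.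
rewrite scaler_sumr -big_split /=; apply: eq_bigr => k _.
by rewrite mcoeffD mcoeffZ scalerDl scalerA.
Qed.

Lemma malgUZ (c : F) (k : K) : << c *g k >> = c *: << k >>.
Proof. by apply/malgP => k'; rewrite mcoeffZ !mcoeffU mulr_natr. Qed.

Lemma ext_U T c k : ext T << c *g k >> = c *: T k.
Proof. by rewrite (@ext_sub T _ _ msuppU_le) big_seq_fset1 mcoeffUU. Qed.

Lemma ext_B T k : ext T << k >> = T k.
Proof. by rewrite ext_U scale1r. Qed.

End Ext.

Section Lin.
Variables (F : fieldType) (K : choiceType).
Definition lin (V : lmodType F) (f : {malg F[K]} -> V) :=
  forall c u v, f (c *: u + v) = c *: f u + f v.

Variable V : lmodType F.
Implicit Types f g : {malg F[K]} -> V.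

Lemma lin0 f : lin f -> f 0 = 0.
Proof.
move=> lf; have := lf 1 0 0; rewrite !scale1r addr0 => /eqP.
by move=> /eqP h; apply: (addrI (f 0)); rewrite addr0 -h.
Qed.
Lemma linD f : lin f -> forall u v, f (u + v) = f u + f v.
Proof. by move=> lf u v; have := lf 1 u v; rewrite !scale1r. Qed.
Lemma linZ f : lin f -> forall c u, f (c *: u) = c *: f u.
Proof. by move=> lf c u; rewrite -[c *: u]addr0 lf (lin0 lf) addr0. Qed.
Lemma lin_sum f (I : Type) (r : seq I) (Q : pred I) (G : I -> {malg F[K]}) :
  lin f -> f (\sum_(i <- r | Q i) G i) = \sum_(i <- r | Q i) f (G i).
Proof. by move=> lf; apply: (big_morph f (linD lf) (lin0 lf)). Qed.

Lemma lin_sum0 f (I : Type) (r : seq I) (G : I -> {malg F[K]}) :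
  lin f -> f (\sum_(i <- r) G i) = \sum_(i <- r) f (G i).
Proof. by move=> lf; apply: (big_morph f (linD lf) (lin0 lf)). Qed.

Lemma malg_decomp (w : {malg F[K]}) : w = \sum_(k <- msupp w) w@_k *: << k >>.
Proof.
by rewrite {1}(monalgE w); apply: eq_bigr => k _; rewrite malgUZ.
Qed.

Lemma lin_ext f g : lin f -> lin g -> (forall k, f << k >> = g << k >>) -> f =1 g.
Proof.
move=> lf lg fg w; rewrite (malg_decomp w) !lin_sum //; apply: eq_bigr => k _.
by rewrite !linZ // fg.
Qed.

Lemma ext_is_lin (T : K -> V) : lin (ext T).
Proof. exact: ext_lin. Qed.

End Lin.
Lemma lin_comp (F : fieldType) (K K2 : choiceType) (V : lmodType F)
  (h : {malg F[K2]} -> {malg F[K]}) (f : {malg F[K]} -> V) :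
  lin h -> lin f -> lin (f \o h).
Proof. by move=> lh lf c u v /=; rewrite lh lf. Qed.

Lemma ext_linT (F : fieldType) (K K2 : choiceType) (V : lmodType F)
  (T : {malg F[K2]} -> K -> V) (u : {malg F[K]}) :
  (forall k, lin (fun v => T v k)) -> lin (fun v => ext (T v) u).
Proof.
move=> h c v1 v2; rewrite /ext scaler_sumr -big_split; apply: eq_bigr => k _ /=.
by rewrite h scalerDr !scalerA mulrC.
Qed.

Local Opaque mkmalgU.
Section Main.
Variables (F : fieldType) (d : Order.disp_t) (P : porderType d) (sim : rel (P * P)).
Hypothesis hlf : locally_finite P.
Hypothesis hsim : bialg_compatible sim.

Local Notation cls := (cls sim).
Local Notation L := {malg F[cls]}.
Local Notation LL := {malg F[(cls * cls)%type]}.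
Local Notation LLL := {malg F[(cls * cls * cls)%type]}.
Local Notation bas := (bas F sim).
Local Notation E := itv_enum.
Local Notation clo := (clo sim).
Local Notation crep := (crep sim).

Lemma sim_refl p : is_itv p -> sim p p.
Proof. by move: hsim => [[h _ _] _ _ _]; apply: h. Qed.
Lemma sim_sym p q : is_itv p -> is_itv q -> sim p q -> sim q p.
Proof. by move: hsim => [[_ h _] _ _ _]; apply: h. Qed.
Lemma sim_trans p q r : is_itv p -> is_itv q -> is_itv r -> sim p q -> sim q r -> sim p r.
Proof. by move: hsim => [[_ _ h] _ _ _]; apply: h. Qed.
Lemma sim_cat (a b c a' b' c' : P) : (a <= b)%O -> (b <= c)%O ->
  (a' <= b')%O -> (b' <= c')%O ->
  sim (a, b) (a', b') -> sim (b, c) (b', c') -> sim (a, c) (a', c').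
Proof. by move: hsim => [_ h _ _]; apply: h. Qed.
Lemma sim_bij (a b a' b' : P) : (a <= b)%O -> (a' <= b')%O -> sim (a, b) (a', b') ->
  exists f : P -> P,
    [/\ (forall x, (a <= x <= b)%O -> (a' <= f x <= b')%O),
        {in [pred x | (a <= x <= b)%O] &, injective f},
        (forall y, (a' <= y <= b')%O -> exists2 x, (a <= x <= b)%O & f x = y) &
        (forall x, (a <= x <= b)%O -> sim (a, x) (a', f x) /\ sim (x, b) (f x, b'))].
Proof. by move: hsim => [_ _ h _]; apply: h. Qed.
Lemma sim_pt (a b : P) : sim (a, a) (b, b).
Proof. by move: hsim => [_ _ _ h]; apply: h. Qed.

Lemma crep_spec p : is_itv p -> is_itv (crep p) && sim p (crep p).
Proof.
move=> hp; rewrite /Defs.crep.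
apply: (@chooseP _ [pred q | is_itv q && sim p q]) => /=.
by rewrite hp sim_refl.
Qed.

Lemma crep_itv p : is_itv p -> is_itv (crep p).
Proof. by move/crep_spec/andP=> []. Qed.
Lemma crep_sim p : is_itv p -> sim p (crep p).
Proof. by move/crep_spec/andP=> []. Qed.

Lemma crep_eq p q : is_itv p -> is_itv q -> sim p q -> crep p = crep q.
Proof.
move=> hp hq hpq; rewrite /Defs.crep.
have e : [pred r | is_itv r && sim p r] =1 [pred r | is_itv r && sim q r].
  move=> r /=; apply/andP/andP => -[hr h]; split => //.
    exact: sim_trans (sim_sym hp hq hpq) h.
  exact: sim_trans hpq h.
rewrite (eq_choose e); apply: choose_id => /=.
  by rewrite hp sim_sym.
by rewrite hq sim_refl.
Qed.

Lemma crep_idem p : is_itv p -> crep (crep p) = crep p.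
Proof.
move=> hp; have hc := crep_itv hp.
by apply: crep_eq => //; apply: sim_sym => //; apply: crep_sim.
Qed.

Lemma clo_ex (a b : P) : (a <= b)%O -> exists2 c, clo a b = Some c & val c = crep (a, b).
Proof.
move=> hab; have hi : is_itv (a, b) by [].
have Pc : is_itv (crep (a, b)) && (crep (crep (a, b)) == crep (a, b)).
  by rewrite crep_itv // crep_idem // eqxx.
by exists (exist _ (crep (a, b)) Pc); rewrite // /Defs.clo insubT.
Qed.

Lemma clo_val (a b : P) c : clo a b = Some c -> val c = crep (a, b).
Proof. by rewrite /Defs.clo => h; have := @insubK _ _ cls (crep (a, b)); rewrite h. Qed.

Lemma val_clo (c : cls) : clo (val c).1 (val c).2 = Some c.
Proof.
rewrite /Defs.clo -surjective_pairing.
by case/andP: (valP c) => _ /eqP ->; rewrite valK.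
Qed.

Lemma val_itv (c : cls) : ((val c).1 <= (val c).2)%O.
Proof. by case/andP: (valP c). Qed.

Lemma clo_eq_sim (a b a' b' : P) : (a <= b)%O -> (a' <= b')%O ->
  clo a b = clo a' b' -> sim (a, b) (a', b').
Proof.
move=> h h'; have [c hc vc] := clo_ex h; have [c' hc' vc'] := clo_ex h'.
rewrite hc hc' => -[e]; subst c'.
have e2 : crep (a, b) = crep (a', b') by rewrite -vc -vc'.
apply: (@sim_trans _ (crep (a, b))) => //; first exact: crep_itv.
  exact: crep_sim.
rewrite e2; apply: sim_sym => //; first exact: crep_itv.
exact: crep_sim.
Qed.

Lemma sim_clo_eq (a b a' b' : P) : (a <= b)%O -> (a' <= b')%O ->
  sim (a, b) (a', b') -> clo a b = clo a' b'.
Proof. by move=> h h' s; rewrite /Defs.clo (@crep_eq (a, b) (a', b')). Qed.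

Lemma clo_pt (a b : P) : clo a a = clo b b.
Proof. by apply: sim_clo_eq => //; apply: sim_pt. Qed.

Lemma pt_sim (a p q : P) : (p <= q)%O -> sim (a, a) (p, q) -> p = q.
Proof.
move=> hpq s; have [f [_ _ hs _]] := sim_bij (lexx a) hpq s.
have hp : (p <= p <= q)%O by rewrite lexx hpq.
have hq : (p <= q <= q)%O by rewrite lexx hpq.
have [x /andP[h1 h2] <-] := hs p hp.
have [y /andP[h3 h4] <-] := hs q hq.
have -> : x = a by apply/le_anti; rewrite h1 h2.
by have -> : y = a by apply/le_anti; rewrite h3 h4.
Qed.

Lemma clo_ptE (a b c : P) : (a <= b)%O -> (clo a b == clo c c) = (a == b).
Proof.
move=> hab; apply/eqP/eqP => [e|->]; last exact: clo_pt.
have s := clo_eq_sim hab (lexx c) e.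
by apply: (@pt_sim c) => //; apply: sim_sym => //; exact: lexx.
Qed.

Lemma enum_spec (a b : P) : uniq (E a b) /\ forall x, (x \in E a b) = (a <= x <= b)%O.
Proof.
have [s hs] := hlf a b.
have ex : exists s0 : seq P, uniq s0 /\ forall x, (x \in s0) = (a <= x <= b)%O.
  exists (undup s); split; first exact: undup_uniq.
  by move=> x; rewrite mem_undup hs.
exact: (epsilon_spec (inhabits [::]) _ ex).
Qed.

Lemma enum_uniq (a b : P) : uniq (E a b). Proof. by case: (enum_spec a b). Qed.
Lemma mem_enum (a b x : P) : (x \in E a b) = (a <= x <= b)%O.
Proof. by case: (enum_spec a b). Qed.


Lemma transport_perm (a b a' b' : P) :
  (a <= b)%O -> (a' <= b')%O -> sim (a, b) (a', b') ->
  exists f : P -> P, perm_eq (map f (E a b)) (E a' b') /\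
    forall x, x \in E a b -> clo a' (f x) = clo a x /\ clo (f x) b' = clo x b.
Proof.
move=> hab hab' s; have [f [hin hinj hsurj hcl]] := sim_bij hab hab' s.
exists f; split.
  apply: uniq_perm; last 2 first.
  - exact: enum_uniq.
  - move=> y; rewrite mem_enum; apply/mapP/idP => [[x hx ->]|hy].
      by apply: hin; rewrite -mem_enum.
    by have [x hx <-] := hsurj y hy; exists x; rewrite ?mem_enum.
  rewrite map_inj_in_uniq ?enum_uniq // => x y hx hy; apply: hinj;
    by rewrite inE -mem_enum.
move=> x; rewrite mem_enum => hx.
have [h1 h2] := hcl x hx; have := hin x hx; case/andP: hx => hx1 hx2.
case/andP => hf1 hf2.
by rewrite (@sim_clo_eq a x a' (f x)) // (@sim_clo_eq x b (f x) b').
Qed.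

Lemma sum_transport (V : zmodType) (h : option cls -> option cls -> V) (a b a' b' : P) :
  (a <= b)%O -> (a' <= b')%O -> sim (a, b) (a', b') ->
  \sum_(y <- E a' b') h (clo a' y) (clo y b') = \sum_(x <- E a b) h (clo a x) (clo x b).
Proof.
move=> hab hab' s; have [f [pe hcl]] := transport_perm hab hab' s.
rewrite -(perm_big _ pe) big_map; apply: eq_big_seq => x hx.
by have [-> ->] := hcl x hx.
Qed.

Lemma size_transport (a b a' b' : P) :
  (a <= b)%O -> (a' <= b')%O -> sim (a, b) (a', b') -> size (E a' b') = size (E a b).
Proof.
move=> hab hab' s; have [f [pe _]] := transport_perm hab hab' s.
by rewrite -(perm_size pe) size_map.
Qed.

Lemma rep_sim (a b : P) c : (a <= b)%O -> clo a b = Some c ->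
  sim (a, b) ((val c).1, (val c).2).
Proof. by move=> hab /clo_val; rewrite -surjective_pairing => ->; apply: crep_sim. Qed.

Lemma sub_enum_l (V : zmodType) (G : P -> V) (a x b : P) : (a <= x)%O -> (x <= b)%O ->
  \sum_(y <- E a x) G y = \sum_(y <- E a b | (y <= x)%O) G y.
Proof.
move=> hax hxb; rewrite -[RHS]big_filter.
have pe : perm_eq (E a x) [seq y <- E a b | (y <= x)%O].
  apply: uniq_perm.
  - exact: enum_uniq.
  - by rewrite filter_uniq // enum_uniq.
  move=> y; rewrite mem_filter !mem_enum; apply/andP/andP => [[h1 h2]|[h1 /andP[h2 h3]]].
    by rewrite h2 h1 (le_trans h2 hxb).
  by rewrite h2 h1.
by rewrite (perm_big _ pe).
Qed.

Lemma sub_enum_r (V : zmodType) (G : P -> V) (a x b : P) : (a <= x)%O -> (x <= b)%O ->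
  \sum_(y <- E x b) G y = \sum_(y <- E a b | (x <= y)%O) G y.
Proof.
move=> hax hxb; rewrite -[RHS]big_filter.
have pe : perm_eq (E x b) [seq y <- E a b | (x <= y)%O].
  apply: uniq_perm.
  - exact: enum_uniq.
  - by rewrite filter_uniq // enum_uniq.
  move=> y; rewrite mem_filter !mem_enum; apply/andP/andP => [[h1 h2]|[h1 /andP[h2 h3]]].
    by rewrite h2 h1 (le_trans hax h1).
  by rewrite h3 h1.
by rewrite (perm_big _ pe).
Qed.

Lemma exch (V : zmodType) (G : P -> P -> V) (a b : P) :
  \sum_(x <- E a b) \sum_(y <- E a x) G y x = \sum_(y <- E a b) \sum_(x <- E y b) G y x.
Proof.
rewrite (@eq_big_seq _ _ _ _ _ _ (fun x => \sum_(y <- E a b | (y <= x)%O) G y x)); last first.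
  by move=> x; rewrite mem_enum => /andP[h1 h2]; apply: sub_enum_l.
rewrite [RHS](@eq_big_seq _ _ _ _ _ _ (fun y => \sum_(x <- E a b | (y <= x)%O) G y x)); last first.
  by move=> y; rewrite mem_enum => /andP[h1 h2]; apply: sub_enum_r.
under eq_bigr do rewrite big_mkcond.
rewrite exchange_big; apply: eq_bigr => y _.
by rewrite [RHS]big_mkcond.
Qed.

Lemma enum_pt (a : P) : perm_eq (E a a) [:: a].
Proof.
apply: uniq_perm => //; first exact: enum_uniq.
by move=> x; rewrite mem_enum inE -eq_le eq_sym.
Qed.

Lemma sum_pt (V : zmodType) (G : P -> V) (a : P) : \sum_(x <- E a a) G x = G a.
Proof. by rewrite (perm_big _ (enum_pt a)) big_seq1. Qed.

Lemma sum_delta (V : zmodType) (G : P -> V) (a b j : P) : (a <= j <= b)%O ->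
  \sum_(x <- E a b) (if x == j then G x else 0) = G j.
Proof.
move=> hj; rewrite (bigD1_seq j) ?enum_uniq ?mem_enum //= eqxx big1 ?addr0 //.
by move=> x /negbTE ->.
Qed.

Lemma tensE (u v : L) : tens u v = ext (fun i => ext (fun j => << (i, j) >>) v) u.
Proof.
rewrite /tens /ext; apply: eq_bigr => i _; rewrite scaler_sumr; apply: eq_bigr => j _.
by rewrite malgUZ scalerA.
Qed.

Lemma tens_linl (v : L) : lin (fun u : L => tens u v).
Proof. by move=> c u1 u2; rewrite !tensE; apply: ext_lin. Qed.

Lemma tens_linr (u : L) : lin (tens u).
Proof.
move=> c v1 v2; rewrite !tensE.
apply: (@ext_linT _ _ _ _ (fun v i => ext (fun j => << (i, j) >>) v)) => i.
exact: ext_is_lin.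
Qed.

Lemma tensB (i j : cls) : tens (<< i >> : L) << j >> = << (i, j) >>.
Proof. by rewrite tensE !ext_B. Qed.

Lemma tens3lE (w : LL) (v : L) :
  tens3l w v = ext (fun k => ext (fun j => << (k.1, k.2, j) >>) v) w.
Proof.
rewrite /tens3l /ext; apply: eq_bigr => i _; rewrite scaler_sumr; apply: eq_bigr => j _.
by rewrite malgUZ scalerA.
Qed.

Lemma tens3l_lin (v : L) : lin (fun w : LL => tens3l w v).
Proof. by move=> c u1 u2; rewrite !tens3lE; apply: ext_lin. Qed.

Lemma tens3lB (k : cls * cls) (j : cls) : tens3l (<< k >> : LL) << j >> = << (k.1, k.2, j) >>.
Proof. by rewrite tens3lE !ext_B. Qed.

Lemma tens3rE (u : L) (w : LL) :
  tens3r u w = ext (fun i => ext (fun k => << (i, k.1, k.2) >>) w) u.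
Proof.
rewrite /tens3r /ext; apply: eq_bigr => i _; rewrite scaler_sumr; apply: eq_bigr => j _.
by rewrite malgUZ scalerA.
Qed.

Lemma tens3r_lin (u : L) : lin (tens3r u).
Proof.
move=> c v1 v2; rewrite !tens3rE.
apply: (@ext_linT _ _ _ _ (fun v i => ext (fun k => << (i, k.1, k.2) >>) v)) => i.
exact: ext_is_lin.
Qed.

Lemma tens3rB (i : cls) (k : cls * cls) : tens3r (<< i >> : L) << k >> = << (i, k.1, k.2) >>.
Proof. by rewrite tens3rE !ext_B. Qed.

Lemma nabla_lin : lin (@nabla F d P sim).
Proof. exact: (ext_is_lin (fun k : cls * cls => nablaB F k.1 k.2)). Qed.
Lemma nablaU (k : cls * cls) : nabla (<< k >> : LL) = nablaB F k.1 k.2.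
Proof. exact: (ext_B (fun k : cls * cls => nablaB F k.1 k.2)). Qed.

Lemma lmul_linl (v : L) : lin (fun u => lmul F sim u v).
Proof. exact: (lin_comp (tens_linl v) nabla_lin). Qed.
Lemma lmul_linr (u : L) : lin (lmul F sim u).
Proof. exact: (lin_comp (tens_linr u) nabla_lin). Qed.
Lemma lmulB (i j : cls) : lmul F sim << i >> << j >> = nablaB F i j.
Proof. by rewrite /lmul tensB nablaU. Qed.

Lemma DeltaE (u : L) : Delta u = ext (@DeltaB F d P sim) u.
Proof. by []. Qed.
Lemma Delta_lin : lin (@Delta F d P sim).
Proof. by move=> c u v; rewrite !DeltaE ext_lin. Qed.
Lemma DeltaU (c : cls) : Delta (<< c >> : L) = DeltaB F c.
Proof. by rewrite DeltaE ext_B. Qed.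

Lemma eps_lin : lin (V := F^o) (@eps F d P sim).
Proof. exact: (ext_is_lin (V := F^o) (@epsB F d P sim)). Qed.
Lemma epsU (c : cls) : eps (<< c >> : L) = epsB F c.
Proof. exact: (ext_B (V := F^o) (@epsB F d P sim)). Qed.

Lemma tmap_lin f g : lin (@tmap F d P sim f g).
Proof. exact: (ext_is_lin (fun k : cls * cls => tens (f << k.1 >>) (g << k.2 >>))). Qed.
Lemma tmapU f g (k : cls * cls) : tmap f g (<< k >> : LL) = tens (f << k.1 >>) (g << k.2 >>).
Proof. exact: (ext_B (fun k : cls * cls => tens (f << k.1 >>) (g << k.2 >>))). Qed.

Lemma Delta_id_lin : lin (@Delta_id F d P sim).
Proof. exact: (ext_is_lin (fun k : cls * cls => tens3l (Delta << k.1 >>) << k.2 >>)). Qed.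
Lemma Delta_idU (k : cls * cls) : Delta_id (<< k >> : LL) = tens3l (Delta << k.1 >>) << k.2 >>.
Proof. exact: (ext_B (fun k : cls * cls => tens3l (Delta << k.1 >>) << k.2 >>)). Qed.

Lemma id_Delta_lin : lin (@id_Delta F d P sim).
Proof. exact: (ext_is_lin (fun k : cls * cls => tens3r << k.1 >> (Delta << k.2 >>))). Qed.
Lemma id_DeltaU (k : cls * cls) : id_Delta (<< k >> : LL) = tens3r << k.1 >> (Delta << k.2 >>).
Proof. exact: (ext_B (fun k : cls * cls => tens3r << k.1 >> (Delta << k.2 >>))). Qed.

Lemma eps_idE (w : LL) : eps_id w = ext (fun k : cls * cls => eps (<< k.1 >> : L) *: (<< k.2 >> : L)) w.
Proof. by apply: eq_bigr => k _; rewrite scalerA. Qed.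
Lemma eps_id_lin : lin (@eps_id F d P sim).
Proof. by move=> c u v; rewrite !eps_idE ext_lin. Qed.
Lemma eps_idU (k : cls * cls) : eps_id (<< k >> : LL) = eps << k.1 >> *: << k.2 >>.
Proof. by rewrite eps_idE ext_B. Qed.

Lemma id_epsE (w : LL) : id_eps w = ext (fun k : cls * cls => eps (<< k.2 >> : L) *: (<< k.1 >> : L)) w.
Proof. by apply: eq_bigr => k _; rewrite scalerA. Qed.
Lemma id_eps_lin : lin (@id_eps F d P sim).
Proof. by move=> c u v; rewrite !id_epsE ext_lin. Qed.
Lemma id_epsU (k : cls * cls) : id_eps (<< k >> : LL) = eps << k.2 >> *: << k.1 >>.
Proof. by rewrite id_epsE ext_B. Qed.

Lemma muhatE (u : L) : muhat F sim u = ext (fun c => mobius F c *: (<< c >> : L)) u.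
Proof. by apply: eq_bigr => k _; rewrite scalerA. Qed.
Lemma muhat_lin : lin (muhat F sim).
Proof. by move=> c u v; rewrite !muhatE ext_lin. Qed.
Lemma muhatU (c : cls) : muhat F sim (<< c >> : L) = mobius F c *: << c >>.
Proof. by rewrite muhatE ext_B. Qed.

Lemma conv_lin f g : lin (@conv F d P sim f g).
Proof. exact: (lin_comp Delta_lin (lin_comp (tmap_lin f g) nabla_lin)). Qed.

Hypothesis hne : exists a : P, True.
Hypothesis hnabla : forall a x b : P, (a <= x)%O -> (x <= b)%O ->
        lmul F sim (bas a x) (bas x b) = bas a b.

Lemma bas_clo (a b : P) c : clo a b = Some c -> bas a b = << c >>.
Proof. by rewrite /Defs.bas => ->. Qed.
Lemma bas_val (c : cls) : bas (val c).1 (val c).2 = << c >>.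
Proof. by rewrite (bas_clo (val_clo c)). Qed.

Lemma nablaB_dec (I J : cls) (a x b : P) : decomp I J (a, x, b) -> nablaB F I J = bas a b.
Proof.
by case=> hax hxb hI hJ; rewrite -lmulB -(bas_clo hI) -(bas_clo hJ); apply: hnabla.
Qed.

Lemma nablaB_nodec (I J : cls) : ~ (exists t, decomp I J t) -> nablaB F I J = 0.
Proof. by move=> h; rewrite /nablaB; case: excluded_middle_informative. Qed.

Definition chain (I J K : cls) (t : P * P * P * P) : Prop :=
  let: (a, x, y, b) := t in
  [/\ (a <= x)%O, (x <= y)%O, (y <= b)%O & [/\ clo a x = Some I, clo x y = Some J & clo y b = Some K]].

Lemma split_clo (a b a' b' x : P) : (a <= x)%O -> (x <= b)%O -> (a' <= b')%O ->
  clo a b = clo a' b' ->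
  exists x', [/\ (a' <= x')%O, (x' <= b')%O, clo a x = clo a' x' & clo x b = clo x' b'].
Proof.
move=> hax hxb hab' e; have hab := le_trans hax hxb.
have [f [hin _ _ hcl]] := sim_bij hab hab' (clo_eq_sim hab hab' e).
have hx : (a <= x <= b)%O by rewrite hax hxb.
have [h1 h2] := hcl x hx; have /andP[hf1 hf2] := hin x hx.
by exists (f x); split => //; apply: sim_clo_eq.
Qed.

Lemma glue (a x b a' x' b' : P) : (a <= x)%O -> (x <= b)%O -> (a' <= x')%O -> (x' <= b')%O ->
  clo a x = clo a' x' -> clo x b = clo x' b' -> clo a b = clo a' b'.
Proof.
move=> h1 h2 h3 h4 e1 e2; apply: sim_clo_eq; [exact: le_trans h1 h2|exact: le_trans h3 h4|].
by apply: (sim_cat h1 h2 h3 h4); apply: clo_eq_sim.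
Qed.

Lemma lhs_chain I J K a x y b : chain I J K (a, x, y, b) ->
  lmul F sim (nablaB F I J) << K >> = bas a b.
Proof.
rewrite /chain => -[h1 h2 h3 [hI hJ hK]]; have [M hM _] := clo_ex (le_trans h1 h2).
rewrite (@nablaB_dec _ _ a x y); last by split.
rewrite (bas_clo hM) lmulB.
by apply: (@nablaB_dec _ _ a y b); split => //; exact: le_trans h1 h2.
Qed.

Lemma rhs_chain I J K a x y b : chain I J K (a, x, y, b) ->
  lmul F sim << I >> (nablaB F J K) = bas a b.
Proof.
rewrite /chain => -[h1 h2 h3 [hI hJ hK]]; have [M hM _] := clo_ex (le_trans h2 h3).
rewrite (@nablaB_dec _ _ x y b); last by split.
rewrite (bas_clo hM) lmulB.
by apply: (@nablaB_dec _ _ a x b); split => //; exact: le_trans h2 h3.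
Qed.

Lemma lhs_nochain I J K : ~ (exists t, chain I J K t) ->
  lmul F sim (nablaB F I J) << K >> = 0.
Proof.
move=> nc; case: (classic (exists t, decomp I J t)) => [[[[a x] y] dIJ]|nd]; last first.
  by rewrite nablaB_nodec // (lin0 (lmul_linl _)).
have [h1 h2 hI hJ] := dIJ; have [M hM _] := clo_ex (le_trans h1 h2).
rewrite (nablaB_dec dIJ) (bas_clo hM) lmulB.
case: (classic (exists t, decomp M K t)) => [[[[a' y'] b'] [h1' h2' hM' hK']]|nd].
  have e : clo a y = clo a' y' by rewrite hM hM'.
  have [x' [hx1 hx2 e1 e2]] := @split_clo a y a' y' x h1 h2 h1' e.
  by exfalso; apply: nc; exists (a', x', y', b'); split => //; split; rewrite -?e1 -?e2.
exact: nablaB_nodec.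
Qed.

Lemma rhs_nochain I J K : ~ (exists t, chain I J K t) ->
  lmul F sim << I >> (nablaB F J K) = 0.
Proof.
move=> nc; case: (classic (exists t, decomp J K t)) => [[[[x y] b] dJK]|nd]; last first.
  by rewrite (@nablaB_nodec J K) // (lin0 (lmul_linr _)).
have [h1 h2 hJ hK] := dJK; have [M hM _] := clo_ex (le_trans h1 h2).
rewrite (nablaB_dec dJK) (bas_clo hM) lmulB.
case: (classic (exists t, decomp I M t)) => [[[[a' x'] b'] [h1' h2' hI' hM']]|nd].
  have e : clo x b = clo x' b' by rewrite hM hM'.
  have [y' [hy1 hy2 e1 e2]] := @split_clo x b x' b' y h1 h2 h2' e.
  by exfalso; apply: nc; exists (a', x', y', b'); split => //; split; rewrite -?e1 -?e2.
exact: nablaB_nodec.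
Qed.

Lemma assocB I J K : lmul F sim (nablaB F I J) << K >> = lmul F sim << I >> (nablaB F J K).
Proof.
case: (classic (exists t, chain I J K t)) => [[[[[a x] y] b] hc]|nc].
  by rewrite (lhs_chain hc) (rhs_chain hc).
by rewrite lhs_nochain // rhs_nochain.
Qed.

Lemma lmul_assoc (u v w : L) :
  lmul F sim (lmul F sim u v) w = lmul F sim u (lmul F sim v w).
Proof.
have l1 := lmul_linl; have l2 := lmul_linr.
move: u; apply: (@lin_ext _ _ _ (fun u => lmul F sim (lmul F sim u v) w)
   (fun u => lmul F sim u (lmul F sim v w))).
- exact: (lin_comp (l1 v) (l1 w)).
- exact: (lmul_linl (lmul F sim v w)).
move=> I; move: v; apply: (@lin_ext _ _ _ (fun v => lmul F sim (lmul F sim << I >> v) w)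
   (fun v => lmul F sim << I >> (lmul F sim v w))).
- exact: (lin_comp (l2 << I >>) (l1 w)).
- exact: (lin_comp (l1 w) (l2 << I >>)).
move=> J; move: w; apply: (@lin_ext _ _ _ (fun w => lmul F sim (lmul F sim << I >> << J >>) w)
   (fun w => lmul F sim << I >> (lmul F sim << J >> w))).
- exact: (lmul_linr (lmul F sim << I >> << J >>)).
- exact: (lin_comp (l2 << J >>) (l2 << I >>)).
move=> K; transitivity (lmul F sim (nablaB F I J) << K >>).
  exact: (congr1 (fun z => lmul F sim z << K >>) (lmulB I J)).
rewrite assocB; exact: (congr1 (lmul F sim << I >>) (esym (lmulB J K))).
Qed.

Lemma unitL_bas (a : P) : unitL F sim = bas a a.
Proof.
have [e _] := hne.
have : exists u : L, exists a0 : P, u = bas a0 a0 by exists (bas e e); exists e.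
move=> ex; rewrite /unitL; have [a0 ->] := epsilon_spec (inhabits 0) _ ex.
by rewrite /Defs.bas (clo_pt a0 a).
Qed.

Lemma lin_id : lin (fun u : L => u). Proof. by []. Qed.

Lemma lmul_unitl (u : L) : lmul F sim (unitL F sim) u = u.
Proof.
move: u; apply: (@lin_ext _ _ _ _ (fun u => u) (lmul_linr _) lin_id) => c.
have hc := val_itv c; rewrite (unitL_bas (val c).1).
have [pt hpt _] := clo_ex (lexx (val c).1).
rewrite (bas_clo hpt) lmulB (@nablaB_dec _ _ (val c).1 (val c).1 (val c).2) ?bas_val //.
by split => //; rewrite val_clo.
Qed.

Lemma lmul_unitr (u : L) : lmul F sim u (unitL F sim) = u.
Proof.
move: u; apply: (@lin_ext _ _ _ _ (fun u => u) (lmul_linl _) lin_id) => c.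
have hc := val_itv c; rewrite (unitL_bas (val c).2).
have [pt hpt _] := clo_ex (lexx (val c).2).
rewrite (bas_clo hpt) lmulB (@nablaB_dec _ _ (val c).1 (val c).2 (val c).2) ?bas_val //.
by split => //; rewrite val_clo.
Qed.

Definition basopt (o : option cls) : L := if o is Some c then << c >> else 0.

Lemma DeltaB_val (c : cls) : DeltaB F c =
  \sum_(x <- E (val c).1 (val c).2) tens (bas (val c).1 x) (bas x (val c).2).
Proof. by rewrite /DeltaB; case: (val c). Qed.

Lemma DeltaB_any (a b : P) c : (a <= b)%O -> clo a b = Some c ->
  DeltaB F c = \sum_(x <- E a b) tens (bas a x) (bas x b).
Proof.
move=> hab hc; rewrite DeltaB_val.
exact: (@sum_transport _ (fun o1 o2 => tens (basopt o1) (basopt o2)) a b _ _ hab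
   (val_itv c) (rep_sim hab hc)).
Qed.

Lemma Delta_bas (a b : P) : (a <= b)%O ->
  Delta (bas a b) = \sum_(x <- E a b) tens (bas a x) (bas x b).
Proof.
move=> hab; have [c hc _] := clo_ex hab.
by rewrite (bas_clo hc) DeltaU (DeltaB_any hab hc).
Qed.

Lemma T3_eq (a y x b : P) : (a <= y)%O -> (y <= x)%O -> (x <= b)%O ->
  tens3l (tens (bas a y) (bas y x)) (bas x b) = tens3r (bas a y) (tens (bas y x) (bas x b)).
Proof.
move=> h1 h2 h3.
have [I hI _] := clo_ex h1; have [J hJ _] := clo_ex h2; have [K hK _] := clo_ex h3.
rewrite (bas_clo hI) (bas_clo hJ) (bas_clo hK).
erewrite (tensB I J), (tensB J K), (tens3lB (I, J) K), (tens3rB I (J, K)).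
by [].
Qed.

Lemma Delta_id_bas (a x b : P) : (a <= x)%O -> (x <= b)%O ->
  Delta_id (tens (bas a x) (bas x b)) =
  \sum_(y <- E a x) tens3l (tens (bas a y) (bas y x)) (bas x b).
Proof.
move=> h1 h2; have [I hI _] := clo_ex h1; have [J hJ _] := clo_ex h2.
have e : tens (bas a x) (bas x b) = << (I, J) >> by rewrite (bas_clo hI) (bas_clo hJ) tensB.
rewrite e Delta_idU /= -(bas_clo hI) -(bas_clo hJ) (Delta_bas h1).
exact: (lin_sum0 _ _ (tens3l_lin (bas x b))).
Qed.

Lemma id_Delta_bas (a x b : P) : (a <= x)%O -> (x <= b)%O ->
  id_Delta (tens (bas a x) (bas x b)) =
  \sum_(y <- E x b) tens3r (bas a x) (tens (bas x y) (bas y b)).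
Proof.
move=> h1 h2; have [I hI _] := clo_ex h1; have [J hJ _] := clo_ex h2.
have e : tens (bas a x) (bas x b) = << (I, J) >> by rewrite (bas_clo hI) (bas_clo hJ) tensB.
rewrite e id_DeltaU /= -(bas_clo hI) -(bas_clo hJ) (Delta_bas h2).
exact: (lin_sum0 _ _ (tens3r_lin (bas a x))).
Qed.

Lemma coassoc (u : L) : Delta_id (Delta u) = id_Delta (Delta u).
Proof.
move: u; apply: (@lin_ext _ _ _ (fun u => Delta_id (Delta u)) (fun u => id_Delta (Delta u))).
- exact: (lin_comp Delta_lin Delta_id_lin).
- exact: (lin_comp Delta_lin id_Delta_lin).
move=> c; have hc := val_itv c.
rewrite -(bas_val c) (Delta_bas hc).
transitivity (\sum_(x <- E (val c).1 (val c).2) \sum_(y <- E (val c).1 x)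
   tens3l (tens (bas (val c).1 y) (bas y x)) (bas x (val c).2)).
  rewrite (lin_sum0 _ _ Delta_id_lin); apply: eq_big_seq.
  by move=> x; rewrite mem_enum => /andP[h1 h2]; apply: Delta_id_bas.
transitivity (\sum_(y <- E (val c).1 (val c).2) \sum_(x <- E y (val c).2)
   tens3l (tens (bas (val c).1 y) (bas y x)) (bas x (val c).2)).
  exact: exch.
rewrite (lin_sum0 _ _ id_Delta_lin); apply: eq_big_seq => y.
rewrite mem_enum => /andP[h1 h2]; rewrite id_Delta_bas //.
apply: eq_big_seq => x; rewrite mem_enum => /andP[h3 h4].
exact: T3_eq.
Qed.

Lemma eps_bas (a x : P) : (a <= x)%O -> eps (bas a x) = (a == x)%:R.
Proof.
move=> hax; have [I hI _] := clo_ex hax.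
rewrite (bas_clo hI) epsU /epsB.
have e1 := clo_ptE (val I).1 hax; have e2 := clo_ptE (val I).1 (val_itv I).
rewrite val_clo -hI e1 in e2; rewrite -e2.
by case: (a == x).
Qed.

Lemma counit_l (u : L) : eps_id (Delta u) = u.
Proof.
move: u; apply: (@lin_ext _ _ _ (fun u => eps_id (Delta u)) (fun u => u)).
- exact: (lin_comp Delta_lin eps_id_lin).
- exact: lin_id.
move=> c; have hc := val_itv c.
rewrite -{2}(bas_val c) -(bas_val c) (Delta_bas hc) (lin_sum0 _ _ eps_id_lin).
transitivity (\sum_(x <- E (val c).1 (val c).2)
  (if x == (val c).1 then bas x (val c).2 else 0)); last first.
  by rewrite sum_delta // lexx hc.
apply: eq_big_seq => x; rewrite mem_enum => /andP[h1 h2].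
have [I hI _] := clo_ex h1; have [J hJ _] := clo_ex h2.
have e : tens (bas (val c).1 x) (bas x (val c).2) = << (I, J) >>
  by rewrite (bas_clo hI) (bas_clo hJ) tensB.
rewrite e eps_idU /= -(bas_clo hI) -(bas_clo hJ) (eps_bas h1) eq_sym.
by case: (x == _); rewrite ?scale1r ?scale0r.
Qed.

Lemma counit_r (u : L) : id_eps (Delta u) = u.
Proof.
move: u; apply: (@lin_ext _ _ _ (fun u => id_eps (Delta u)) (fun u => u)).
- exact: (lin_comp Delta_lin id_eps_lin).
- exact: lin_id.
move=> c; have hc := val_itv c.
rewrite -{2}(bas_val c) -(bas_val c) (Delta_bas hc) (lin_sum0 _ _ id_eps_lin).
transitivity (\sum_(x <- E (val c).1 (val c).2)
  (if x == (val c).2 then bas (val c).1 x else 0)); last first.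
  by rewrite sum_delta // lexx hc.
apply: eq_big_seq => x; rewrite mem_enum => /andP[h1 h2].
have [I hI _] := clo_ex h1; have [J hJ _] := clo_ex h2.
have e : tens (bas (val c).1 x) (bas x (val c).2) = << (I, J) >>
  by rewrite (bas_clo hI) (bas_clo hJ) tensB.
rewrite e id_epsU /= -(bas_clo hI) -(bas_clo hJ) (eps_bas h2).
by case: (x == _); rewrite ?scale1r ?scale0r.
Qed.

Lemma etaE (r : F) : @Defs.eta F d P sim r = r *: unitL F sim.
Proof. by []. Qed.

Lemma Delta_eta (r : F) : Delta (@Defs.eta F d P sim r) =
  r *: tens (@Defs.eta F d P sim 1) (@Defs.eta F d P sim 1).
Proof.
have [e _] := hne; rewrite !etaE !scale1r (unitL_bas e) (linZ Delta_lin).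
by rewrite (Delta_bas (lexx e)) sum_pt.
Qed.

Lemma eps_eta (r : F) : eps (@Defs.eta F d P sim r) = r.
Proof.
have [e _] := hne; rewrite etaE (unitL_bas e).
have := linZ (V := F^o) eps_lin r (bas e e); rewrite /= => ->.
by rewrite eps_bas // eqxx; apply: mulr1.
Qed.

Lemma epsB_eq (I : cls) : epsB F I = ((val I).1 == (val I).2)%:R.
Proof. by rewrite /epsB; case: (_ == _). Qed.

Lemma eps_nablaB (I J : cls) : eps (nablaB F I J) = epsB F I * epsB F J.
Proof.
case: (classic (exists t, decomp I J t)) => [[[[a x] b] dIJ]|nd].
  have [h1 h2 hI hJ] := dIJ.
  rewrite (nablaB_dec dIJ) eps_bas ?(le_trans h1 h2) //.
  rewrite -(epsU I) -(epsU J) -(bas_clo hI) -(bas_clo hJ) !eps_bas //.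
  have [eax|nax] := eqVneq a x.
    by subst x; rewrite mul1r.
  rewrite mul0r; case: eqP => // eab; subst b.
  by case/eqP: nax; apply/le_anti; rewrite h1 h2.
rewrite nablaB_nodec // (lin0 (V := F^o) eps_lin) !epsB_eq.
have [e1|] := eqVneq (val I).1 (val I).2; last by rewrite mul0r.
have [e2|] := eqVneq (val J).1 (val J).2; last by rewrite mulr0.
exfalso; apply: nd; exists ((val I).1, (val I).1, (val I).1); split => //.
- by have := val_clo I; rewrite -e1.
- have := val_clo J; rewrite -e2 => <-; exact: clo_pt.
Qed.

Lemma eps_mul (u v : L) : eps (lmul F sim u v) = eps u * eps v.
Proof.
have l1 := lmul_linl; have l2 := lmul_linr.
move: u; apply: (@lin_ext _ _ (F^o) (fun u => eps (lmul F sim u v)) (fun u => eps u * eps v)).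
- exact: (lin_comp (l1 v) eps_lin).
- move=> c x y; rewrite /= (eps_lin c x y) /= mulrDl; congr (_ + _).
  symmetry; exact: (mulrA c (eps x) (eps v)).
move=> I; move: v; apply: (@lin_ext _ _ (F^o) (fun v => eps (lmul F sim << I >> v))
   (fun v => eps << I >> * eps v)).
- exact: (lin_comp (l2 << I >>) eps_lin).
- move=> c x y; rewrite /= (eps_lin c x y) /= mulrDr; congr (_ + _).
  by rewrite mulrA [eps _ * c]mulrC -mulrA.
move=> J /=; transitivity (eps (nablaB F I J)).
  by rewrite (lmulB I J).
rewrite eps_nablaB; congr (_ * _); symmetry; exact: epsU.
Qed.

Lemma mweak_bialg : mweak_bialgebra F sim.
Proof.
split.
- exact: lmul_assoc.
- move=> r u; rewrite !etaE; split.
    have := linZ (lmul_linl u) r (unitL F sim); rewrite /= => ->.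
    by rewrite lmul_unitl.
  have := linZ (lmul_linr u) r (unitL F sim); rewrite /= => ->.
  by rewrite lmul_unitr.
- exact: coassoc.
- by move=> u; split; [apply: counit_l|apply: counit_r].
split.
- exact: Delta_eta.
- exact: eps_mul.
- exact: eps_eta.
Qed.

Definition om (m : cls -> F) (o : option cls) : F := if o is Some c then m c else 0.

Lemma incevE (m : cls -> F) (a b : P) : incev m a b = om m (clo a b).
Proof. by []. Qed.

Definition msum (s : bool) (m : cls -> F) (a b : P) : F :=
  \sum_(x <- E a b) (if s then (if x != b then incev m a x else 0)
                      else (if x != a then incev m x b else 0)).

Definition mstep (s : bool) (m : cls -> F) (c : cls) : F :=
  if (val c).1 == (val c).2 then 1 else - msum s m (val c).1 (val c).2.

Fixpoint mF (s : bool) (n : nat) (c : cls) : F :=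
  if n is n'.+1 then mstep s (mF s n') c else 0.

Lemma msum_transport s m (a b : P) c : (a <= b)%O -> clo a b = Some c ->
  msum s m (val c).1 (val c).2 = msum s m a b.
Proof.
move=> hab hc; have hc' := val_itv c; set a' := (val c).1; set b' := (val c).2.
rewrite /msum; case: s.
  pose h (o1 o2 : option cls) : F := if o2 != clo b b then om m o1 else 0.
  transitivity (\sum_(y <- E a' b') h (clo a' y) (clo y b')).
    by apply: eq_big_seq => y; rewrite mem_enum => /andP[h1 h2]; rewrite /h (clo_ptE b h2).
  rewrite (@sum_transport _ h a b a' b' hab hc' (rep_sim hab hc)).
  by apply: eq_big_seq => y; rewrite mem_enum => /andP[h1 h2]; rewrite /h (clo_ptE b h2).
pose h (o1 o2 : option cls) : F := if o1 != clo b b then om m o2 else 0.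
transitivity (\sum_(y <- E a' b') h (clo a' y) (clo y b')).
  by apply: eq_big_seq => y; rewrite mem_enum => /andP[h1 h2]; rewrite /h (clo_ptE b h1) eq_sym.
rewrite (@sum_transport _ h a b a' b' hab hc' (rep_sim hab hc)).
by apply: eq_big_seq => y; rewrite mem_enum => /andP[h1 h2]; rewrite /h (clo_ptE b h1) eq_sym.
Qed.

Lemma mstep_any s m (a b : P) c : (a <= b)%O -> clo a b = Some c ->
  mstep s m c = if a == b then 1 else - msum s m a b.
Proof.
move=> hab hc; rewrite /mstep (msum_transport _ _ hab hc).
have e1 := clo_ptE a hab; have e2 := clo_ptE a (val_itv c).
by rewrite val_clo -hc e1 in e2; rewrite e2.
Qed.

Definition sz (c : cls) := size (E (val c).1 (val c).2).

Lemma sz_any (a b : P) c : (a <= b)%O -> clo a b = Some c -> sz c = size (E a b).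
Proof. by move=> hab hc; apply: (size_transport hab (val_itv c) (rep_sim hab hc)). Qed.

Lemma size_pos (a b : P) : (a <= b)%O -> (0 < size (E a b))%N.
Proof. move=> hab; have : a \in E a b by rewrite mem_enum lexx hab. by case: (E a b). Qed.

Lemma size_ltl (a x b : P) : (a <= x)%O -> (x <= b)%O -> x != b ->
  (size (E a x) < size (E a b))%N.
Proof.
move=> h1 h2 nx; have hb : b \in E a b by rewrite mem_enum (le_trans h1 h2) lexx.
have hle : (size (E a x) <= size (rem b (E a b)))%N.
  apply: uniq_leq_size; first exact: enum_uniq.
  move=> y; rewrite mem_enum (mem_rem_uniq _ (enum_uniq a b)) inE mem_enum.
  case/andP=> h3 h4; rewrite h3 (le_trans h4 h2) andbT.
  by rewrite andbT; apply/eqP => eyb; subst y; case/eqP: nx; apply/le_anti; rewrite h2 h4.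
rewrite (size_rem hb) in hle; apply: (leq_ltn_trans hle).
by rewrite prednK ?leqnn // (size_pos (le_trans h1 h2)).
Qed.

Lemma size_ltr (a x b : P) : (a <= x)%O -> (x <= b)%O -> x != a ->
  (size (E x b) < size (E a b))%N.
Proof.
move=> h1 h2 nx; have ha : a \in E a b by rewrite mem_enum lexx (le_trans h1 h2).
have hle : (size (E x b) <= size (rem a (E a b)))%N.
  apply: uniq_leq_size; first exact: enum_uniq.
  move=> y; rewrite mem_enum (mem_rem_uniq _ (enum_uniq a b)) inE mem_enum.
  case/andP=> h3 h4; rewrite h4 (le_trans h1 h3) andbT.
  by rewrite andbT; apply/eqP => eyb; subst y; case/eqP: nx; apply/le_anti; rewrite h1 h3.
rewrite (size_rem ha) in hle; apply: (leq_ltn_trans hle).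
by rewrite prednK ?leqnn // (size_pos (le_trans h1 h2)).
Qed.

Lemma msum_ext s m1 m2 (a b : P) : (a <= b)%O ->
  (forall c, (sz c < size (E a b))%N -> m1 c = m2 c) -> msum s m1 a b = msum s m2 a b.
Proof.
move=> hab hm; apply: eq_big_seq => x; rewrite mem_enum => /andP[h1 h2].
case: s.
  case: ifP => // nx; have [c hc _] := clo_ex h1; rewrite /incev hc; apply: hm.
  by rewrite (sz_any h1 hc); apply: size_ltl.
case: ifP => // nx; have [c hc _] := clo_ex h2; rewrite /incev hc; apply: hm.
by rewrite (sz_any h2 hc); apply: size_ltr.
Qed.

Lemma mF_stab s n c : (sz c <= n)%N -> mF s n c = mF s n.+1 c.
Proof.
elim: n c => [|n IH] c hn.
  by move: hn; rewrite leqn0 /sz size_eq0 => /eqP e; move: (size_pos (val_itv c)); rewrite e.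
rewrite /= /mstep; case: ifP => // _; congr (- _).
apply: msum_ext; first exact: val_itv.
move=> c' hc'; apply: IH; rewrite -ltnS; apply: (leq_trans hc'); exact: hn.
Qed.

Lemma mF_le s n N c : (sz c <= n)%N -> (n <= N)%N -> mF s n c = mF s N c.
Proof.
move=> h1 /subnK <-; elim: (N - n)%N => [|k IH]; first by rewrite add0n.
by rewrite IH addSn mF_stab // (leq_trans h1) // leq_addl.
Qed.

Definition mS (s : bool) (c : cls) : F := mF s (sz c) c.

Lemma mS_rec s (a b : P) c : (a <= b)%O -> clo a b = Some c ->
  mS s c = if a == b then 1 else - msum s (mS s) a b.
Proof.
move=> hab hc; rewrite /mS; have hsz := sz_any hab hc.
have := size_pos hab; rewrite -hsz; case e : (sz c) => [//|k] _.
rewrite /= (mstep_any _ _ hab hc); case: ifP => // _; congr (- _).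
apply: msum_ext => // c' hc'; rewrite /mS; symmetry; apply: mF_le => //.
by rewrite -ltnS -e hsz.
Qed.

Lemma mobL (a b : P) : (a <= b)%O -> \sum_(x <- E a b) incev (mS true) a x = (a == b)%:R.
Proof.
move=> hab; have [c hc _] := clo_ex hab.
have [eab|nab] := eqVneq a b.
  subst b; rewrite sum_pt /incev hc (mS_rec _ hab hc) eqxx //.
rewrite (bigD1_seq b) ?enum_uniq ?mem_enum ?hab ?lexx //=.
rewrite {1}/incev hc (mS_rec _ hab hc) (negbTE nab) /msum -big_mkcond /=.
by rewrite addNr.
Qed.

Lemma mobR (a b : P) : (a <= b)%O -> \sum_(x <- E a b) incev (mS false) x b = (a == b)%:R.
Proof.
move=> hab; have [c hc _] := clo_ex hab.
have [eab|nab] := eqVneq a b.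
  subst b; rewrite sum_pt /incev hc (mS_rec _ hab hc) eqxx //.
rewrite (bigD1_seq a) ?enum_uniq ?mem_enum ?hab ?lexx //=.
rewrite {1}/incev hc (mS_rec _ hab hc) (negbTE nab) /msum -big_mkcond /=.
by rewrite addNr.
Qed.

Lemma mLR (a b : P) : (a <= b)%O -> incev (mS true) a b = incev (mS false) a b.
Proof.
move=> hab.
pose H (x y : P) := incev (mS true) a x * incev (mS false) y b.
have e1 : \sum_(x <- E a b) \sum_(y <- E x b) H x y = incev (mS true) a b.
  transitivity (\sum_(x <- E a b) (if x == b then incev (mS true) a x else 0)); last first.
    by rewrite sum_delta // hab lexx.
  apply: eq_big_seq => x; rewrite mem_enum => /andP[h1 h2].
  rewrite /H -mulr_sumr (mobR h2); case: (x == b); by rewrite ?mulr1 ?mulr0.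
have e2 : \sum_(x <- E a b) \sum_(y <- E x b) H x y = incev (mS false) a b.
  rewrite -(exch (fun x y => H x y)).
  transitivity (\sum_(y <- E a b) (if y == a then incev (mS false) y b else 0)); last first.
    by rewrite sum_delta // hab lexx.
  apply: eq_big_seq => y; rewrite mem_enum => /andP[h1 h2].
  rewrite /H -mulr_suml (mobL h1) eq_sym; case: (y == a); by rewrite ?mul1r ?mul0r.
by rewrite -e1 -e2.
Qed.

Lemma inc_conv_val (Phi Psi : cls -> F) (c : cls) : inc_conv Phi Psi c =
  \sum_(x <- E (val c).1 (val c).2) incev Phi (val c).1 x * incev Psi x (val c).2.
Proof. by rewrite /inc_conv; case: (val c). Qed.

Lemma inc_conv_any (Phi Psi : cls -> F) (a b : P) c : (a <= b)%O -> clo a b = Some c ->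
  inc_conv Phi Psi c = \sum_(x <- E a b) incev Phi a x * incev Psi x b.
Proof.
move=> hab hc; rewrite inc_conv_val.
exact: (@sum_transport _ (fun o1 o2 => om Phi o1 * om Psi o2) a b _ _ hab
   (val_itv c) (rep_sim hab hc)).
Qed.

Lemma incev_zeta (a b : P) : (a <= b)%O -> incev (@zeta F d P sim) a b = 1.
Proof. by move=> hab; have [c hc _] := clo_ex hab; rewrite /incev hc. Qed.

Lemma mobius_ex : exists m : cls -> F,
  inc_conv m (@zeta F d P sim) =1 @incU F d P sim /\ inc_conv (@zeta F d P sim) m =1 @incU F d P sim.
Proof.
exists (mS true); split => c; rewrite inc_conv_val /incU epsB_eq; have hc := val_itv c.
  rewrite -(mobL hc); apply: eq_big_seq => x; rewrite mem_enum => /andP[h1 h2].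
  by rewrite incev_zeta // mulr1.
rewrite -(mobR hc); apply: eq_big_seq => x; rewrite mem_enum => /andP[h1 h2].
by rewrite incev_zeta // mul1r mLR.
Qed.

Lemma mobius_spec : inc_conv (@mobius F d P sim) (@zeta F d P sim) =1 @incU F d P sim /\
  inc_conv (@zeta F d P sim) (@mobius F d P sim) =1 @incU F d P sim.
Proof. rewrite /mobius; exact: (epsilon_spec _ _ mobius_ex). Qed.

Lemma mob_left (a b : P) : (a <= b)%O ->
  \sum_(x <- E a b) incev (@mobius F d P sim) a x = (a == b)%:R.
Proof.
move=> hab; have [c hc _] := clo_ex hab.
have := (proj1 mobius_spec) c; rewrite (inc_conv_any _ _ hab hc) /incU.
rewrite -(epsU c) -(bas_clo hc) (eps_bas hab) => <-.
apply: eq_big_seq => x; rewrite mem_enum => /andP[h1 h2].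
by rewrite incev_zeta // mulr1.
Qed.

Lemma mob_right (a b : P) : (a <= b)%O ->
  \sum_(x <- E a b) incev (@mobius F d P sim) x b = (a == b)%:R.
Proof.
move=> hab; have [c hc _] := clo_ex hab.
have := (proj2 mobius_spec) c; rewrite (inc_conv_any _ _ hab hc) /incU.
rewrite -(epsU c) -(bas_clo hc) (eps_bas hab) => <-.
apply: eq_big_seq => x; rewrite mem_enum => /andP[h1 h2].
by rewrite incev_zeta // mul1r.
Qed.

Lemma conv_bas (f g : L -> L) (a b : P) : (a <= b)%O ->
  conv f g (bas a b) = \sum_(x <- E a b) lmul F sim (f (bas a x)) (g (bas x b)).
Proof.
move=> hab; rewrite /conv (Delta_bas hab) (lin_sum0 _ _ (tmap_lin f g)) (lin_sum0 _ _ nabla_lin).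
apply: eq_big_seq => x; rewrite mem_enum => /andP[h1 h2].
have [I hI _] := clo_ex h1; have [J hJ _] := clo_ex h2.
have e : tens (bas a x) (bas x b) = << (I, J) >>
  by rewrite (bas_clo hI) (bas_clo hJ) tensB.
by rewrite e tmapU /= -(bas_clo hI) -(bas_clo hJ).
Qed.

Lemma muhat_bas (a b : P) : (a <= b)%O ->
  muhat F sim (bas a b) = incev (@mobius F d P sim) a b *: bas a b.
Proof. by move=> hab; have [c hc _] := clo_ex hab; rewrite (bas_clo hc) muhatU /incev hc. Qed.

Lemma etaeps_lin : lin (fun u : L => @Defs.eta F d P sim (eps u)).
Proof.
move=> c u v; rewrite !etaE (eps_lin c u v) /=.
by rewrite scalerDl scalerA.
Qed.

Lemma etaeps_bas (a b : P) : (a <= b)%O ->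
  @Defs.eta F d P sim (eps (bas a b)) = (a == b)%:R *: bas a b.
Proof.
move=> hab; rewrite etaE (eps_bas hab); case: eqP => [<-|_].
  by rewrite (unitL_bas a).
by rewrite !scale0r.
Qed.

Lemma muhat_antipode : is_antipode F sim (muhat F sim).
Proof.
split.
- exact: muhat_lin.
- apply: (@lin_ext _ _ _ _ _ (conv_lin _ _) etaeps_lin) => c.
  have hc := val_itv c; rewrite -(bas_val c) (conv_bas _ _ hc) (etaeps_bas hc).
  rewrite -(mob_left hc) scaler_suml; apply: eq_big_seq => x.
  rewrite mem_enum => /andP[h1 h2]; rewrite (muhat_bas h1) /=.
  by rewrite (linZ (lmul_linl _)) hnabla.
- apply: (@lin_ext _ _ _ _ _ (conv_lin _ _) etaeps_lin) => c.
  have hc := val_itv c; rewrite -(bas_val c) (conv_bas _ _ hc) (etaeps_bas hc).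
  rewrite -(mob_right hc) scaler_suml; apply: eq_big_seq => x.
  rewrite mem_enum => /andP[h1 h2]; rewrite (muhat_bas h2) /=.
  by rewrite (linZ (lmul_linr _)) hnabla.
Qed.

Lemma antipode_unique (S : L -> L) : is_antipode F sim S -> S =1 muhat F sim.
Proof.
case=> linS hSl _.
have lS : lin S by [].
apply: (lin_ext lS muhat_lin) => c; have hc := val_itv c.
rewrite -(bas_val c); set a := (val c).1; set b := (val c).2.
pose X := \sum_(x <- E a b) incev (@mobius F d P sim) x b *:
            lmul F sim (conv S idfun (bas a x)) (bas x b).
have e1 : X = muhat F sim (bas a b).
  rewrite (muhat_bas hc) /X.
  transitivity (\sum_(x <- E a b) (if x == a then incev (@mobius F d P sim) x b *: bas x b else 0)); last first.
    by rewrite sum_delta // lexx hc.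
  apply: eq_big_seq => x; rewrite mem_enum => /andP[h1 h2].
  rewrite hSl (etaeps_bas h1) (linZ (lmul_linl _)) hnabla //.
  have [<-|nax] := eqVneq a x; first by rewrite ?eqxx scale1r.
  by rewrite scale0r scaler0.
have e2 : X = S (bas a b).
  rewrite /X.
  transitivity (\sum_(x <- E a b) \sum_(y <- E a x)
     incev (@mobius F d P sim) x b *: lmul F sim (S (bas a y)) (bas y b)).
    apply: eq_big_seq => x; rewrite mem_enum => /andP[h1 h2].
    rewrite (conv_bas _ _ h1) (lin_sum0 _ _ (lmul_linl _)) scaler_sumr.
    apply: eq_big_seq => y; rewrite mem_enum => /andP[h3 h4] /=.
    by rewrite lmul_assoc hnabla.
  rewrite exch.
  transitivity (\sum_(y <- E a b) (if y == b then lmul F sim (S (bas a y)) (bas y b) else 0)); last first.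
    rewrite sum_delta; last by rewrite hc lexx.
    by rewrite -(unitL_bas b) lmul_unitr.
  apply: eq_big_seq => y; rewrite mem_enum => /andP[h1 h2].
  rewrite -scaler_suml (mob_right h2).
  by case: (y == b); rewrite ?scale1r ?scale0r.
by rewrite -e1 -e2.
Qed.

Lemma main_result : mweak_hopf F sim /\ is_antipode F sim (muhat F sim) /\
  (forall S, is_antipode F sim S -> S =1 muhat F sim).
Proof.
split; last split.
- split; first exact: mweak_bialg.
  by exists (muhat F sim); exact: muhat_antipode.
- exact: muhat_antipode.
- exact: antipode_unique.
Qed.
End Main.

Theorem corollary7p5 (F : fieldType) (d : Order.disp_t) (P : porderType d)
    (sim : rel (P * P))
    (hne : exists a : P, True)
    (hcount : countable_poset P)
    (hlf : locally_finite P)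
    (hsim : bialg_compatible sim)
    (hnabla : forall a x b : P, (a <= x)%O -> (x <= b)%O ->
        lmul F sim (bas F sim a x) (bas F sim x b) = bas F sim a b) :
  mweak_hopf F sim /\ is_antipode F sim (muhat F sim) /\
  (forall S, is_antipode F sim S -> S =1 muhat F sim).
Proof. exact: (@main_result F d P sim hlf hsim hne hnabla). Qed.
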